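(* Let $m_1,m_2,m_3>0$ and let $q_1,q_2,q_3$ be a choreographic solution of $$\ddot q_k=\sum_{j=1,\,j\neq k}^{3} m_j (q_j-q_k)\, f\!\left(\|q_j-q_k\|^2\right),\qquad k\in\{1,2,3\},$$ where $f:\mathbb{R}_{>0}\to\mathbb{R}_{>0}$ is positive and $\sqrt{x}\,f(x)$ is decreasing. If the curve along which the masses move has an axis of symmetry, then $m_1=m_2=m_3$.
   Context: A choreographic solution is one for which there exist a twice continuously differentiable periodic function $p$ and constants $h_1,h_2,h_3$ with $q_k(t)=p(t+h_k)$. The axis of symmetry hypothesis is understood, as in the paper, as: the curve lies in the plane and (after choice of coordinates and time origin) $p(-t)=\begin{pmatrix}1&0\\0&-1\end{pmatrix}p(t)$ for all $t$. The center of mass is assumed at the origin: $\sum_k m_k q_k=0$. *)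

(* Defs.v *)
From Stdlib Require Import Reals.
From Coquelicot Require Import Coquelicot.
Open Scope R_scope.

Definition vadd (x y : R * R) : R * R := (fst x + fst y, snd x + snd y).
Definition vsub (x y : R * R) : R * R := (fst x - fst y, snd x - snd y).
Definition vscale (a : R) (x : R * R) : R * R := (a * fst x, a * snd x).
Definition vdot (x y : R * R) : R := fst x * fst y + snd x * snd y.
Definition vnorm2 (x : R * R) : R := vdot x x.

Definition C2 (g : R -> R) : Prop :=
  exists dg ddg : R -> R,
    (forall t, is_derive g t (dg t)) /\
    (forall t, is_derive dg t (ddg t)) /\
    (forall t, continuous ddg t).

Definition C2v (p : R -> R * R) : Prop :=
  C2 (fun t => fst (p t)) /\ C2 (fun t => snd (p t)).

Definition acc (q : R -> R * R) (t : R) : R * R :=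
  (Derive_n (fun s => fst (q s)) 2 t, Derive_n (fun s => snd (q s)) 2 t).

(* Bodies are indexed by 0,1,2. Term j of the force acting on body k:
   m_j (q_j - q_k) f(|q_j - q_k|^2), and 0 when j = k. *)
Definition force_term (f : R -> R) (m : nat -> R) (q : nat -> R -> R * R)
    (j k : nat) (t : R) : R * R :=
  if Nat.eqb j k then (0, 0)
  else vscale (m j * f (vnorm2 (vsub (q j t) (q k t)))) (vsub (q j t) (q k t)).

Definition rhs (f : R -> R) (m : nat -> R) (q : nat -> R -> R * R)
    (k : nat) (t : R) : R * R :=
  vadd (force_term f m q 0 k t)
       (vadd (force_term f m q 1 k t) (force_term f m q 2 k t)).

Definition is_solution (f : R -> R) (m : nat -> R) (q : nat -> R -> R * R) : Prop :=
  (forall j k t, (j < 3)%nat -> (k < 3)%nat -> j <> k -> q j t <> q k t) /\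
  (forall k, (k < 3)%nat -> C2v (q k)) /\
  (forall k t, (k < 3)%nat -> acc (q k) t = rhs f m q k t).

Definition center_of_mass_zero (m : nat -> R) (q : nat -> R -> R * R) : Prop :=
  forall t, vadd (vscale (m 0%nat) (q 0%nat t))
             (vadd (vscale (m 1%nat) (q 1%nat t)) (vscale (m 2%nat) (q 2%nat t)))
           = (0, 0).

Definition choreography_curve (q : nat -> R -> R * R) (p : R -> R * R) : Prop :=
  C2v p /\ (exists T, 0 < T /\ forall t, p (t + T) = p t) /\
  exists h : nat -> R, forall k t, (k < 3)%nat -> q k t = p (t + h k).

Definition reflect_line (c : R * R) (th : R) (x : R * R) : R * R :=
  let u := (cos th, sin th) in
  vadd c (vsub (vscale (2 * vdot (vsub x c) u) u) (vsub x c)).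

(* Axis of symmetry: in suitable coordinates (a line = the x-axis) and time
   origin s, p(-t) = diag(1,-1) p(t). *)
Definition has_symmetry_axis (p : R -> R * R) : Prop :=
  exists (c : R * R) (th s : R),
    forall t, p (s - t) = reflect_line c th (p (s + t)).

(* Main.v *)
Require Import Defs.
From Stdlib Require Import Reals.
From Coquelicot Require Import Coquelicot.
From Stdlib Require Import Lra Lia Psatz ZArith Classical.
Open Scope R_scope.

Lemma lin3 m0 m1 m2 Z K da dma db dmb dc dmc :
 0<m0 -> 0<m1 -> 0<m2 ->
 m1*da + m2*db = Z -> m0*dma + m2*dc = Z -> m0*dmb + m1*dmc = Z ->
 m1*dma + m2*dmb = Z + K -> m0*da + m2*dmc = Z + K -> m0*db + m1*dc = Z + K ->
 K = 0 /\ m2*(db-dmb) = -(m1*(da-dma)) /\ m2*(dc-dmc) = m0*(da-dma) /\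
 m0*m1*(da+dma) = (m0+m1-m2)*Z /\ m0*m2*(db+dmb) = (m0+m2-m1)*Z /\
 m1*m2*(dc+dmc) = (m1+m2-m0)*Z.
Proof.
intros h0 h1 h2 C0 C1 C2 C0' C1' C2'.
assert (HK: K = 0).
{ assert (E: m0*((m1*dma+m2*dmb) - (m1*da+m2*db)) + m1*((m0*da + m2*dmc) - (m0*dma+m2*dc)) + m2*((m0*db + m1*dc) - (m0*dmb + m1*dmc)) = 0) by ring.
  rewrite C0, C1, C2, C0', C1', C2' in E.
  assert (E2: (m0+m1+m2)*K = 0) by lra.
  apply Rmult_integral in E2. destruct E2; lra. }
subst K.
split; [reflexivity|].
split; [lra|]. split; [lra|].
split.
{ assert (E: m0*((m1*da+m2*db) + (m1*dma+m2*dmb)) + m1*((m0*dma+m2*dc) + (m0*da+m2*dmc)) - m2*((m0*dmb+m1*dmc)+(m0*db+m1*dc)) = 2*(m0*m1*(da+dma))) by ring.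
  rewrite C0, C1, C2, C0', C1', C2' in E. lra. }
split.
{ assert (E: m0*((m1*da+m2*db) + (m1*dma+m2*dmb)) - m1*((m0*dma+m2*dc) + (m0*da+m2*dmc)) + m2*((m0*dmb+m1*dmc)+(m0*db+m1*dc)) = 2*(m0*m2*(db+dmb))) by ring.
  rewrite C0, C1, C2, C0', C1', C2' in E. lra. }
{ assert (E: - m0*((m1*da+m2*db) + (m1*dma+m2*dmb)) + m1*((m0*dma+m2*dc) + (m0*da+m2*dmc)) + m2*((m0*dmb+m1*dmc)+(m0*db+m1*dc)) = 2*(m1*m2*(dc+dmc))) by ring.
  rewrite C0, C1, C2, C0', C1', C2' in E. lra. }
Qed.

Lemma cross_key m0 m1 m2 Zx Zy Px Py ax ay max may bx by' mbx mby cx cy mcx mcy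
  fa fma fb fmb fc fmc :
 m2*(bx-mbx) = -(m1*(ax-max)) -> m2*(by'-mby) = -(m1*(ay-may)) ->
 m2*(cx-mcx) = m0*(ax-max) -> m2*(cy-mcy) = m0*(ay-may) ->
 m0*m1*(ax+max) = (m0+m1-m2)*Zx -> m0*m1*(ay+may) = (m0+m1-m2)*Zy ->
 m0*m2*(bx+mbx) = (m0+m2-m1)*Zx -> m0*m2*(by'+mby) = (m0+m2-m1)*Zy ->
 m1*m2*(cx+mcx) = (m1+m2-m0)*Zx -> m1*m2*(cy+mcy) = (m1+m2-m0)*Zy ->
 m2*(fb*bx-fmb*mbx) = -(m1*(fa*ax-fma*max)) -> m2*(fb*by'-fmb*mby) = -(m1*(fa*ay-fma*may)) ->
 m2*(fc*cx-fmc*mcx) = m0*(fa*ax-fma*max) -> m2*(fc*cy-fmc*mcy) = m0*(fa*ay-fma*may) ->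
 m0*m1*(fa*ax+fma*max) = (m0+m1-m2)*Px -> m0*m1*(fa*ay+fma*may) = (m0+m1-m2)*Py ->
 m0*m2*(fb*bx+fmb*mbx) = (m0+m2-m1)*Px -> m0*m2*(fb*by'+fmb*mby) = (m0+m2-m1)*Py ->
 m1*m2*(fc*cx+fmc*mcx) = (m1+m2-m0)*Px -> m1*m2*(fc*cy+fmc*mcy) = (m1+m2-m0)*Py ->
 4*m0*(m2-m1)*(Zx*Py-Zy*Px) = 0 /\ 4*m1*(m2-m0)*(Zx*Py-Zy*Px) = 0.
Proof.
intros Obx Oby Ocx Ocy Eax Eay Ebx Eby Ecx Ecy VObx VOby VOcx VOcy VEax VEay VEbx VEby VEcx VEcy.
set (X := Zx*Py-Zy*Px).
set (Ya := (ax-max)*(fa*ay - fma*may) - (ay-may)*(fa*ax - fma*max)).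
set (Yb := (bx-mbx)*(fb*by' - fmb*mby) - (by'-mby)*(fb*bx - fmb*mbx)).
set (Yc := (cx-mcx)*(fc*cy - fmc*mcy) - (cy-mcy)*(fc*cx - fmc*mcx)).
assert (IA0: (m0*m1*(ax+max))*(m0*m1*(fa*ay+fma*may)) - (m0*m1*(ay+may))*(m0*m1*(fa*ax+fma*max)) + (m0*m1)^2*Ya = 0) by (unfold Ya; ring).
rewrite Eax, Eay, VEax, VEay in IA0.
assert (IA: (m0+m1-m2)^2*X + (m0*m1)^2*Ya = 0) by (rewrite <- IA0; unfold X; ring).
assert (IB0: (m0*m2*(bx+mbx))*(m0*m2*(fb*by'+fmb*mby)) - (m0*m2*(by'+mby))*(m0*m2*(fb*bx+fmb*mbx)) + (m0*m2)^2*Yb = 0) by (unfold Yb; ring).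
rewrite Ebx, Eby, VEbx, VEby in IB0.
assert (IB: (m0+m2-m1)^2*X + (m0*m2)^2*Yb = 0) by (rewrite <- IB0; unfold X; ring).
assert (IC0: (m1*m2*(cx+mcx))*(m1*m2*(fc*cy+fmc*mcy)) - (m1*m2*(cy+mcy))*(m1*m2*(fc*cx+fmc*mcx)) + (m1*m2)^2*Yc = 0) by (unfold Yc; ring).
rewrite Ecx, Ecy, VEcx, VEcy in IC0.
assert (IC: (m1+m2-m0)^2*X + (m1*m2)^2*Yc = 0) by (rewrite <- IC0; unfold X; ring).
assert (RB0: (m2*(bx-mbx))*(m2*(fb*by'-fmb*mby)) - (m2*(by'-mby))*(m2*(fb*bx-fmb*mbx)) = m2^2*Yb) by (unfold Yb; ring).
rewrite Obx, Oby, VObx, VOby in RB0.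
assert (RB: m2^2*Yb - m1^2*Ya = 0) by (rewrite <- RB0; unfold Ya; ring).
assert (RC0: (m2*(cx-mcx))*(m2*(fc*cy-fmc*mcy)) - (m2*(cy-mcy))*(m2*(fc*cx-fmc*mcx)) = m2^2*Yc) by (unfold Yc; ring).
rewrite Ocx, Ocy, VOcx, VOcy in RC0.
assert (RC: m2^2*Yc - m0^2*Ya = 0) by (rewrite <- RC0; unfold Ya; ring).
split.
- replace (4*m0*(m2-m1)*X) with (((m0+m2-m1)^2*X + (m0*m2)^2*Yb) - ((m0+m1-m2)^2*X + (m0*m1)^2*Ya) - m0^2*(m2^2*Yb - m1^2*Ya)) by ring.
  rewrite IA, IB, RB. ring.
- replace (4*m1*(m2-m0)*X) with (((m1+m2-m0)^2*X + (m1*m2)^2*Yc) - ((m0+m1-m2)^2*X + (m0*m1)^2*Ya) - m1^2*(m2^2*Yc - m0^2*Ya)) by ring.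
  rewrite IA, IC, RC. ring.
Qed.

Lemma cont_of_der (g : R -> R) : (forall t, ex_derive g t) -> continuity g.
Proof.
intros H t. apply continuity_pt_filterlim. apply (ex_derive_continuous (K:=R_AbsRing) (V:=R_NormedModule) g). apply H.
Qed.

Lemma der_const (g : R -> R) : (forall t, is_derive g t 0) -> forall a b, g a = g b.
Proof.
intros H a b.
assert (Hc: forall x, continuity_pt g x).
{ apply cont_of_der. intro t. exists 0. apply H. }
destruct (MVT_gen g a b (fun _ => 0)) as [c [_ Hc']].
- intros x _. apply H.
- intros x _. apply Hc.
- lra.
Qed.

Lemma der_uniq (g1 g2 : R -> R) x l1 l2 :
  (forall t, g1 t = g2 t) -> is_derive g1 x l1 -> is_derive g2 x l2 -> l1 = l2.
Proof.
intros E H1 H2. apply is_derive_unique in H1. apply is_derive_unique in H2.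
rewrite <- H1, <- H2. apply Derive_ext. exact E.
Qed.

Lemma ivt_any (g : R -> R) a b : continuity g -> g a < 0 -> 0 < g b ->
  exists z, g z = 0.
Proof.
intros Hc Ha Hb.
destruct (Rlt_or_le a b) as [Hab|Hab].
- destruct (IVT g a b Hc Hab Ha Hb) as [z [_ Hz]]. eauto.
- destruct (Req_dec a b) as [E|E]. { subst. lra. }
  assert (Hba: b < a) by lra.
  assert (Hc2: continuity (fun x => - g x)) by (apply continuity_opp; exact Hc).
  assert (H1: (fun x => - g x) b < 0) by (simpl; lra).
  assert (H2: 0 < (fun x => - g x) a) by (simpl; lra).
  destruct (IVT (fun x => - g x) b a Hc2 Hba H1 H2) as [z [_ Hz]].
  exists z. lra.
Qed.

Lemma pos_preserved (g : R -> R) a : continuity g -> (forall t, g t <> 0) -> 0 < g a ->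
  forall b, 0 < g b.
Proof.
intros Hc Hn Ha b. destruct (Rlt_or_le 0 (g b)) as [H|H]; auto.
destruct (Req_dec (g b) 0) as [E|E]. { exfalso; exact (Hn b E). }
destruct (ivt_any g b a Hc) as [z Hz]; [lra|lra|]. exfalso; exact (Hn z Hz).
Qed.

Lemma per_nat (g : R -> R) T : (forall t, g (t + T) = g t) ->
  forall n t, g (t + INR n * T) = g t /\ g (t - INR n * T) = g t.
Proof.
intros Hp n. induction n as [|n IH]; intro t.
- simpl. split; f_equal; ring.
- rewrite S_INR. split.
  + replace (t + (INR n + 1) * T) with ((t + INR n * T) + T) by ring.
    rewrite Hp. apply IH.
  + destruct (IH t) as [_ H2]. rewrite <- H2.
    rewrite <- (Hp (t - (INR n + 1) * T)). f_equal. ring.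
Qed.

Lemma per_int (g : R -> R) T : (forall t, g (t + T) = g t) ->
  forall k t, g (t - IZR k * T) = g t.
Proof.
intros Hp k t. destruct (Z_le_gt_dec 0 k) as [Hk|Hk].
- rewrite <- (Z2Nat.id k Hk). rewrite <- INR_IZR_INZ. apply per_nat; auto.
- replace k with (- Z.of_nat (Z.to_nat (- k)))%Z by lia.
  rewrite opp_IZR, <- INR_IZR_INZ.
  replace (t - - INR (Z.to_nat (- k)) * T) with (t + INR (Z.to_nat (- k)) * T) by ring.
  apply per_nat; auto.
Qed.

Lemma per_max (g : R -> R) T : continuity g -> 0 < T -> (forall t, g (t + T) = g t) ->
  exists tm, forall t, g t <= g tm.
Proof.
intros Hc HT Hp.
destruct (continuity_ab_maj g 0 T) as [tm [Htm _]]. lra. intros; apply Hc.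
exists tm. intro t.
set (k := Zfloor (t / T)).
destruct (Zfloor_bound (t / T)) as [B1 B2]. fold k in B1, B2.
rewrite <- (per_int g T Hp k t).
apply Htm. split.
- apply Rmult_le_reg_r with (/ T). apply Rinv_0_lt_compat; lra.
  replace ((t - IZR k * T) * / T) with (t / T - IZR k) by (field; lra). lra.
- apply Rmult_le_reg_r with (/ T). apply Rinv_0_lt_compat; lra.
  replace ((t - IZR k * T) * / T) with (t / T - IZR k) by (field; lra).
  replace (T * / T) with 1 by (field; lra). lra.
Qed.

Lemma ratio_one (g : R -> R) T d b0 b1 : continuity g -> 0 < T -> (forall t, g (t + T) = g t) ->
  (forall t, 0 < g t) -> 0 < b0 -> 0 < b1 -> (forall t, b1 * g (t + d) = b0 * g t) -> b0 = b1.
Proof.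
intros Hc HT Hp Hpos H0 H1 Hr.
destruct (per_max g T Hc HT Hp) as [tm Htm].
destruct (Rtotal_order b0 b1) as [L|[E|G]]; auto; exfalso.
-
  specialize (Hr (tm - d)). replace (tm - d + d) with tm in Hr by ring.
  specialize (Htm (tm - d)). pose proof (Hpos (tm - d)). nra.
- specialize (Hr tm). specialize (Htm (tm + d)). pose proof (Hpos tm). nra.
Qed.

Definition nrm (x y : R) : R := x*x + y*y.
Definition dd (g : R -> R) (u a : R) : R := g (u + a) - g u.

Lemma refl_alg C S X Y : C*C+S*S = 1 -> nrm (C*X+S*Y) (S*X-C*Y) = nrm X Y.
Proof. intro H. unfold nrm. replace (X*X+Y*Y) with ((C*C+S*S)*(X*X+Y*Y)) by (rewrite H; ring). ring. Qed.

Lemma unrefl C S P Q A B : C*C+S*S = 1 -> C*P+S*Q = C*A+S*B -> S*P-C*Q = S*A-C*B -> P = A /\ Q = B.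
Proof.
intros H E1 E2.
assert (HP: P = C*(C*P+S*Q)+S*(S*P-C*Q)) by (transitivity ((C*C+S*S)*P); [rewrite H; ring | ring]).
assert (HQ: Q = S*(C*P+S*Q)-C*(S*P-C*Q)) by (transitivity ((C*C+S*S)*Q); [rewrite H; ring | ring]).
assert (HA: A = C*(C*A+S*B)+S*(S*A-C*B)) by (transitivity ((C*C+S*S)*A); [rewrite H; ring | ring]).
assert (HB: B = S*(C*A+S*B)-C*(S*A-C*B)) by (transitivity ((C*C+S*S)*B); [rewrite H; ring | ring]).
rewrite E1, E2 in HP, HQ. split; congruence.
Qed.

Lemma mirror_deriv (px py dpx dpy ddpx ddpy : R -> R) s cx cy C S :
 (forall t, is_derive px t (dpx t)) -> (forall t, is_derive dpx t (ddpx t)) ->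
 (forall t, is_derive py t (dpy t)) -> (forall t, is_derive dpy t (ddpy t)) ->
 (forall v, px (2*s - v) = cx + C * (px v - cx) + S * (py v - cy)) ->
 (forall v, py (2*s - v) = cy + S * (px v - cx) - C * (py v - cy)) ->
 (forall v, ddpx (2*s - v) = C * ddpx v + S * ddpy v) /\
 (forall v, ddpy (2*s - v) = S * ddpx v - C * ddpy v).
Proof.
intros Dx DDx Dy DDy Sx Sy.
assert (D1x: forall v, - dpx (2*s - v) = C * dpx v + S * dpy v).
{ intro v. apply (der_uniq (fun v => px (2*s - v)) (fun v => cx + C * (px v - cx) + S * (py v - cy)) v).
  - exact Sx.
  - assert (H: is_derive (fun v => px (2*s - v)) v (- dpx (2*s - v))).
    { auto_derive. apply (ex_intro _ _ (Dx _)). rewrite (is_derive_unique _ _ _ (Dx _)). unfold Rminus. ring. }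
    exact H.
  - auto_derive. split. apply (ex_intro _ _ (Dx _)). split. apply (ex_intro _ _ (Dy _)). easy.
    rewrite (is_derive_unique _ _ _ (Dx _)), (is_derive_unique _ _ _ (Dy _)). ring. }
assert (D1y: forall v, - dpy (2*s - v) = S * dpx v - C * dpy v).
{ intro v. apply (der_uniq (fun v => py (2*s - v)) (fun v => cy + S * (px v - cx) - C * (py v - cy)) v).
  - exact Sy.
  - auto_derive. apply (ex_intro _ _ (Dy _)). rewrite (is_derive_unique _ _ _ (Dy _)). unfold Rminus. ring.
  - auto_derive. split. apply (ex_intro _ _ (Dx _)). split. apply (ex_intro _ _ (Dy _)). easy.
    rewrite (is_derive_unique _ _ _ (Dx _)), (is_derive_unique _ _ _ (Dy _)). ring. }
split; intro v.
- apply (der_uniq (fun v => - dpx (2*s - v)) (fun v => C * dpx v + S * dpy v) v).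
  + exact D1x.
  + auto_derive. apply (ex_intro _ _ (DDx _)). rewrite (is_derive_unique _ _ _ (DDx _)). unfold Rminus. ring.
  + auto_derive. split. apply (ex_intro _ _ (DDx _)). split. apply (ex_intro _ _ (DDy _)). easy.
    rewrite (is_derive_unique _ _ _ (DDx _)), (is_derive_unique _ _ _ (DDy _)). ring.
- apply (der_uniq (fun v => - dpy (2*s - v)) (fun v => S * dpx v - C * dpy v) v).
  + exact D1y.
  + auto_derive. apply (ex_intro _ _ (DDy _)). rewrite (is_derive_unique _ _ _ (DDy _)). unfold Rminus. ring.
  + auto_derive. split. apply (ex_intro _ _ (DDx _)). split. apply (ex_intro _ _ (DDy _)). easy.
    rewrite (is_derive_unique _ _ _ (DDx _)), (is_derive_unique _ _ _ (DDy _)). ring.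
Qed.

Lemma mirror_eq (f : R -> R) (px py ddpx ddpy : R -> R) s cx cy C S w1 w2 a1 a2 :
 C*C+S*S = 1 ->
 (forall v, px (2*s - v) = cx + C * (px v - cx) + S * (py v - cy)) ->
 (forall v, py (2*s - v) = cy + S * (px v - cx) - C * (py v - cy)) ->
 (forall v, ddpx (2*s - v) = C * ddpx v + S * ddpy v) ->
 (forall v, ddpy (2*s - v) = S * ddpx v - C * ddpy v) ->
 (forall u, ddpx u = w1 * f (nrm (dd px u a1) (dd py u a1)) * dd px u a1 + w2 * f (nrm (dd px u a2) (dd py u a2)) * dd px u a2) ->
 (forall u, ddpy u = w1 * f (nrm (dd px u a1) (dd py u a1)) * dd py u a1 + w2 * f (nrm (dd px u a2) (dd py u a2)) * dd py u a2) ->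
 forall u,
 ddpx u = w1 * f (nrm (dd px u (-a1)) (dd py u (-a1))) * dd px u (-a1) + w2 * f (nrm (dd px u (-a2)) (dd py u (-a2))) * dd px u (-a2) /\
 ddpy u = w1 * f (nrm (dd px u (-a1)) (dd py u (-a1))) * dd py u (-a1) + w2 * f (nrm (dd px u (-a2)) (dd py u (-a2))) * dd py u (-a2).
Proof.
intros HCS Sx Sy HAx HAy Ex Ey u.
assert (Hdx: forall a, dd px (2*s-u) a = C * dd px u (-a) + S * dd py u (-a)).
{ intro a. unfold dd. replace (2*s - u + a) with (2*s - (u + -a)) by ring. rewrite !Sx. ring. }
assert (Hdy: forall a, dd py (2*s-u) a = S * dd px u (-a) - C * dd py u (-a)).
{ intro a. unfold dd. replace (2*s - u + a) with (2*s - (u + -a)) by ring. rewrite !Sy. ring. }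
assert (Hn: forall a, nrm (dd px (2*s-u) a) (dd py (2*s-u) a) = nrm (dd px u (-a)) (dd py u (-a))).
{ intro a. rewrite Hdx, Hdy. apply refl_alg; exact HCS. }
specialize (Ex (2*s-u)). specialize (Ey (2*s-u)).
rewrite HAx, !Hn, ?Hdx, ?Hdy in Ex. rewrite HAy, !Hn, ?Hdx, ?Hdy in Ey.
apply (unrefl C S); [exact HCS| rewrite Ex; ring | rewrite Ey; ring].
Qed.

Lemma mirror_com (px py : R -> R) s cx cy C S m0 m1 m2 h0 h1 h2 :
 C*C+S*S = 1 ->
 (forall v, px (2*s - v) = cx + C * (px v - cx) + S * (py v - cy)) ->
 (forall v, py (2*s - v) = cy + S * (px v - cx) - C * (py v - cy)) ->
 (forall t, m0 * px (t+h0) + m1 * px (t+h1) + m2 * px (t+h2) = 0) ->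
 (forall t, m0 * py (t+h0) + m1 * py (t+h1) + m2 * py (t+h2) = 0) ->
 exists Kx Ky, forall w,
  m0 * px (w - h0) + m1 * px (w - h1) + m2 * px (w - h2) = Kx /\
  m0 * py (w - h0) + m1 * py (w - h1) + m2 * py (w - h2) = Ky.
Proof.
intros HCS Sx Sy Cx Cy.
set (M := m0+m1+m2).
exists (M*cx + C*(-M*cx) + S*(-M*cy)), (M*cy + S*(-M*cx) - C*(-M*cy)).
intro w.
specialize (Cx (2*s - w)). specialize (Cy (2*s - w)).
replace (2*s - w + h0) with (2*s - (w - h0)) in Cx, Cy by ring.
replace (2*s - w + h1) with (2*s - (w - h1)) in Cx, Cy by ring.
replace (2*s - w + h2) with (2*s - (w - h2)) in Cx, Cy by ring.
rewrite !Sx in Cx. rewrite !Sy in Cy.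
set (A := m0 * (px (w - h0) - cx) + m1 * (px (w - h1) - cx) + m2 * (px (w - h2) - cx)).
set (B := m0 * (py (w - h0) - cy) + m1 * (py (w - h1) - cy) + m2 * (py (w - h2) - cy)).
assert (E1: C*A + S*B = -M*cx) by (unfold A, B, M; lra).
assert (E2: S*A - C*B = -M*cy) by (unfold A, B, M; lra).
assert (HA: A = C*(C*A+S*B)+S*(S*A-C*B)) by (transitivity ((C*C+S*S)*A); [rewrite HCS; ring | ring]).
assert (HB: B = S*(C*A+S*B)-C*(S*A-C*B)) by (transitivity ((C*C+S*S)*B); [rewrite HCS; ring | ring]).
rewrite E1, E2 in HA, HB.
split.
- unfold A in HA. unfold M in *. lra.
- unfold B in HB. unfold M in *. lra.
Qed.

Lemma cross_zero (f : R -> R) (m0 m1 m2 : R) (px py ddpx ddpy : R -> R) (h0 h1 h2 s cx cy C S : R)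
 (Hm0 : 0 < m0) (Hm1 : 0 < m1) (Hm2 : 0 < m2)
 (HCS : C*C + S*S = 1)
 (Sx : forall v, px (2*s - v) = cx + C * (px v - cx) + S * (py v - cy))
 (Sy : forall v, py (2*s - v) = cy + S * (px v - cx) - C * (py v - cy))
 (HAx : forall v, ddpx (2*s - v) = C * ddpx v + S * ddpy v)
 (HAy : forall v, ddpy (2*s - v) = S * ddpx v - C * ddpy v)
 (Cx : forall t, m0 * px (t+h0) + m1 * px (t+h1) + m2 * px (t+h2) = 0)
 (Cy : forall t, m0 * py (t+h0) + m1 * py (t+h1) + m2 * py (t+h2) = 0)
 (EQ0x : forall u, ddpx u = m1 * f (nrm (dd px u (h1-h0)) (dd py u (h1-h0))) * dd px u (h1-h0) + m2 * f (nrm (dd px u (h2-h0)) (dd py u (h2-h0))) * dd px u (h2-h0))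
 (EQ0y : forall u, ddpy u = m1 * f (nrm (dd px u (h1-h0)) (dd py u (h1-h0))) * dd py u (h1-h0) + m2 * f (nrm (dd px u (h2-h0)) (dd py u (h2-h0))) * dd py u (h2-h0))
 (EQ1x : forall u, ddpx u = m0 * f (nrm (dd px u (h0-h1)) (dd py u (h0-h1))) * dd px u (h0-h1) + m2 * f (nrm (dd px u (h2-h1)) (dd py u (h2-h1))) * dd px u (h2-h1))
 (EQ1y : forall u, ddpy u = m0 * f (nrm (dd px u (h0-h1)) (dd py u (h0-h1))) * dd py u (h0-h1) + m2 * f (nrm (dd px u (h2-h1)) (dd py u (h2-h1))) * dd py u (h2-h1))
 (EQ2x : forall u, ddpx u = m0 * f (nrm (dd px u (h0-h2)) (dd py u (h0-h2))) * dd px u (h0-h2) + m1 * f (nrm (dd px u (h1-h2)) (dd py u (h1-h2))) * dd px u (h1-h2))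
 (EQ2y : forall u, ddpy u = m0 * f (nrm (dd px u (h0-h2)) (dd py u (h0-h2))) * dd py u (h0-h2) + m1 * f (nrm (dd px u (h1-h2)) (dd py u (h1-h2))) * dd py u (h1-h2))
 (Hne : ~ (m0 = m1 /\ m1 = m2)) :
 forall u, px u * ddpy u - py u * ddpx u = 0.
Proof.
pose proof (mirror_eq f px py ddpx ddpy s cx cy C S _ _ _ _ HCS Sx Sy HAx HAy EQ0x EQ0y) as M0.
pose proof (mirror_eq f px py ddpx ddpy s cx cy C S _ _ _ _ HCS Sx Sy HAx HAy EQ1x EQ1y) as M1.
pose proof (mirror_eq f px py ddpx ddpy s cx cy C S _ _ _ _ HCS Sx Sy HAx HAy EQ2x EQ2y) as M2.
replace (-(h1-h0)) with (h0-h1) in M0 by ring.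
replace (-(h2-h0)) with (h0-h2) in M0 by ring.
replace (-(h0-h1)) with (h1-h0) in M1 by ring.
replace (-(h2-h1)) with (h1-h2) in M1 by ring.
replace (-(h0-h2)) with (h2-h0) in M2 by ring.
replace (-(h1-h2)) with (h2-h1) in M2 by ring.
destruct (mirror_com px py s cx cy C S m0 m1 m2 h0 h1 h2 HCS Sx Sy Cx Cy) as [Kx [Ky MC]].
intro u.
set (M := m0+m1+m2).
assert (C0x: m1 * dd px u (h1-h0) + m2 * dd px u (h2-h0) = -M * px u).
{ specialize (Cx (u - h0)). unfold dd, M.
  replace (u - h0 + h0) with u in Cx by ring.
  replace (u - h0 + h1) with (u + (h1-h0)) in Cx by ring.
  replace (u - h0 + h2) with (u + (h2-h0)) in Cx by ring.
  lra. }
assert (C1x: m0 * dd px u (h0-h1) + m2 * dd px u (h2-h1) = -M * px u).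
{ specialize (Cx (u - h1)). unfold dd, M.
  replace (u - h1 + h0) with (u + (h0-h1)) in Cx by ring.
  replace (u - h1 + h1) with u in Cx by ring.
  replace (u - h1 + h2) with (u + (h2-h1)) in Cx by ring.
  lra. }
assert (C2x: m0 * dd px u (h0-h2) + m1 * dd px u (h1-h2) = -M * px u).
{ specialize (Cx (u - h2)). unfold dd, M.
  replace (u - h2 + h0) with (u + (h0-h2)) in Cx by ring.
  replace (u - h2 + h1) with (u + (h1-h2)) in Cx by ring.
  replace (u - h2 + h2) with u in Cx by ring.
  lra. }
assert (C0y: m1 * dd py u (h1-h0) + m2 * dd py u (h2-h0) = -M * py u).
{ specialize (Cy (u - h0)). unfold dd, M.
  replace (u - h0 + h0) with u in Cy by ring.
  replace (u - h0 + h1) with (u + (h1-h0)) in Cy by ring.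
  replace (u - h0 + h2) with (u + (h2-h0)) in Cy by ring.
  lra. }
assert (C1y: m0 * dd py u (h0-h1) + m2 * dd py u (h2-h1) = -M * py u).
{ specialize (Cy (u - h1)). unfold dd, M.
  replace (u - h1 + h0) with (u + (h0-h1)) in Cy by ring.
  replace (u - h1 + h1) with u in Cy by ring.
  replace (u - h1 + h2) with (u + (h2-h1)) in Cy by ring.
  lra. }
assert (C2y: m0 * dd py u (h0-h2) + m1 * dd py u (h1-h2) = -M * py u).
{ specialize (Cy (u - h2)). unfold dd, M.
  replace (u - h2 + h0) with (u + (h0-h2)) in Cy by ring.
  replace (u - h2 + h1) with (u + (h1-h2)) in Cy by ring.
  replace (u - h2 + h2) with u in Cy by ring.
  lra. }
assert (C0px: m1 * dd px u (h0-h1) + m2 * dd px u (h0-h2) = -M * px u + Kx).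
{ pose proof (proj1 (MC (u + h0))) as HH. unfold dd, M.
  replace (u + h0 - h0) with u in HH by ring.
  replace (u + h0 - h1) with (u + (h0-h1)) in HH by ring.
  replace (u + h0 - h2) with (u + (h0-h2)) in HH by ring.
  lra. }
assert (C1px: m0 * dd px u (h1-h0) + m2 * dd px u (h1-h2) = -M * px u + Kx).
{ pose proof (proj1 (MC (u + h1))) as HH. unfold dd, M.
  replace (u + h1 - h0) with (u + (h1-h0)) in HH by ring.
  replace (u + h1 - h1) with u in HH by ring.
  replace (u + h1 - h2) with (u + (h1-h2)) in HH by ring.
  lra. }
assert (C2px: m0 * dd px u (h2-h0) + m1 * dd px u (h2-h1) = -M * px u + Kx).
{ pose proof (proj1 (MC (u + h2))) as HH. unfold dd, M.
  replace (u + h2 - h0) with (u + (h2-h0)) in HH by ring.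
  replace (u + h2 - h1) with (u + (h2-h1)) in HH by ring.
  replace (u + h2 - h2) with u in HH by ring.
  lra. }
assert (C0py: m1 * dd py u (h0-h1) + m2 * dd py u (h0-h2) = -M * py u + Ky).
{ pose proof (proj2 (MC (u + h0))) as HH. unfold dd, M.
  replace (u + h0 - h0) with u in HH by ring.
  replace (u + h0 - h1) with (u + (h0-h1)) in HH by ring.
  replace (u + h0 - h2) with (u + (h0-h2)) in HH by ring.
  lra. }
assert (C1py: m0 * dd py u (h1-h0) + m2 * dd py u (h1-h2) = -M * py u + Ky).
{ pose proof (proj2 (MC (u + h1))) as HH. unfold dd, M.
  replace (u + h1 - h0) with (u + (h1-h0)) in HH by ring.
  replace (u + h1 - h1) with u in HH by ring.
  replace (u + h1 - h2) with (u + (h1-h2)) in HH by ring.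
  lra. }
assert (C2py: m0 * dd py u (h2-h0) + m1 * dd py u (h2-h1) = -M * py u + Ky).
{ pose proof (proj2 (MC (u + h2))) as HH. unfold dd, M.
  replace (u + h2 - h0) with (u + (h2-h0)) in HH by ring.
  replace (u + h2 - h1) with (u + (h2-h1)) in HH by ring.
  replace (u + h2 - h2) with u in HH by ring.
  lra. }
set (fa := f (nrm (dd px u (h1-h0)) (dd py u (h1-h0)))).
set (fma := f (nrm (dd px u (h0-h1)) (dd py u (h0-h1)))).
set (fb := f (nrm (dd px u (h2-h0)) (dd py u (h2-h0)))).
set (fmb := f (nrm (dd px u (h0-h2)) (dd py u (h0-h2)))).
set (fc := f (nrm (dd px u (h2-h1)) (dd py u (h2-h1)))).
set (fmc := f (nrm (dd px u (h1-h2)) (dd py u (h1-h2)))).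
assert (V0x: m1 * (fa * dd px u (h1-h0)) + m2 * (fb * dd px u (h2-h0)) = ddpx u) by (pose proof (EQ0x u) as HH; unfold fa, fb in *; lra).
assert (V1x: m0 * (fma * dd px u (h0-h1)) + m2 * (fc * dd px u (h2-h1)) = ddpx u) by (pose proof (EQ1x u) as HH; unfold fma, fc in *; lra).
assert (V2x: m0 * (fmb * dd px u (h0-h2)) + m1 * (fmc * dd px u (h1-h2)) = ddpx u) by (pose proof (EQ2x u) as HH; unfold fmb, fmc in *; lra).
assert (V0px: m1 * (fma * dd px u (h0-h1)) + m2 * (fmb * dd px u (h0-h2)) = ddpx u + 0) by (pose proof (proj1 (M0 u)) as HH; unfold fma, fmb in *; lra).
assert (V1px: m0 * (fa * dd px u (h1-h0)) + m2 * (fmc * dd px u (h1-h2)) = ddpx u + 0) by (pose proof (proj1 (M1 u)) as HH; unfold fa, fmc in *; lra).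
assert (V2px: m0 * (fb * dd px u (h2-h0)) + m1 * (fc * dd px u (h2-h1)) = ddpx u + 0) by (pose proof (proj1 (M2 u)) as HH; unfold fb, fc in *; lra).
assert (V0y: m1 * (fa * dd py u (h1-h0)) + m2 * (fb * dd py u (h2-h0)) = ddpy u) by (pose proof (EQ0y u) as HH; unfold fa, fb in *; lra).
assert (V1y: m0 * (fma * dd py u (h0-h1)) + m2 * (fc * dd py u (h2-h1)) = ddpy u) by (pose proof (EQ1y u) as HH; unfold fma, fc in *; lra).
assert (V2y: m0 * (fmb * dd py u (h0-h2)) + m1 * (fmc * dd py u (h1-h2)) = ddpy u) by (pose proof (EQ2y u) as HH; unfold fmb, fmc in *; lra).
assert (V0py: m1 * (fma * dd py u (h0-h1)) + m2 * (fmb * dd py u (h0-h2)) = ddpy u + 0) by (pose proof (proj2 (M0 u)) as HH; unfold fma, fmb in *; lra).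
assert (V1py: m0 * (fa * dd py u (h1-h0)) + m2 * (fmc * dd py u (h1-h2)) = ddpy u + 0) by (pose proof (proj2 (M1 u)) as HH; unfold fa, fmc in *; lra).
assert (V2py: m0 * (fb * dd py u (h2-h0)) + m1 * (fc * dd py u (h2-h1)) = ddpy u + 0) by (pose proof (proj2 (M2 u)) as HH; unfold fb, fc in *; lra).
destruct (lin3 m0 m1 m2 (-M * px u) Kx (dd px u (h1-h0)) (dd px u (h0-h1)) (dd px u (h2-h0)) (dd px u (h0-h2)) (dd px u (h2-h1)) (dd px u (h1-h2)) Hm0 Hm1 Hm2 C0x C1x C2x C0px C1px C2px) as [_ [Obx [Ocx [Eax [Ebx Ecx]]]]].
destruct (lin3 m0 m1 m2 (ddpx u) 0 (fa * dd px u (h1-h0)) (fma * dd px u (h0-h1)) (fb * dd px u (h2-h0)) (fmb * dd px u (h0-h2)) (fc * dd px u (h2-h1)) (fmc * dd px u (h1-h2)) Hm0 Hm1 Hm2 V0x V1x V2x V0px V1px V2px) as [_ [VObx [VOcx [VEax [VEbx VEcx]]]]].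
destruct (lin3 m0 m1 m2 (-M * py u) Ky (dd py u (h1-h0)) (dd py u (h0-h1)) (dd py u (h2-h0)) (dd py u (h0-h2)) (dd py u (h2-h1)) (dd py u (h1-h2)) Hm0 Hm1 Hm2 C0y C1y C2y C0py C1py C2py) as [_ [Oby [Ocy [Eay [Eby Ecy]]]]].
destruct (lin3 m0 m1 m2 (ddpy u) 0 (fa * dd py u (h1-h0)) (fma * dd py u (h0-h1)) (fb * dd py u (h2-h0)) (fmb * dd py u (h0-h2)) (fc * dd py u (h2-h1)) (fmc * dd py u (h1-h2)) Hm0 Hm1 Hm2 V0y V1y V2y V0py V1py V2py) as [_ [VOby [VOcy [VEay [VEby VEcy]]]]].
destruct (cross_key m0 m1 m2 (-M * px u) (-M * py u) (ddpx u) (ddpy u) _ _ _ _ _ _ _ _ _ _ _ _ fa fma fb fmb fc fmc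
  Obx Oby Ocx Ocy Eax Eay Ebx Eby Ecx Ecy VObx VOby VOcx VOcy VEax VEay VEbx VEby VEcx VEcy) as [K1 K2].
assert (HM: 0 < M) by (unfold M; lra).
assert (HX: (-M * px u) * ddpy u - (-M * py u) * ddpx u = 0).
{ destruct (Req_dec m2 m1) as [E|E].
  - assert (m2 <> m0) by (intro; apply Hne; split; lra).
    apply Rmult_integral in K2. destruct K2 as [K2|K2]; [|exact K2].
    exfalso. assert (4*m1*(m2-m0) <> 0). { apply Rmult_integral_contrapositive; split; [lra|]. lra. } contradiction.
  - apply Rmult_integral in K1. destruct K1 as [K1|K1]; [|exact K1].
    exfalso. assert (4*m0*(m2-m1) <> 0). { apply Rmult_integral_contrapositive; split; [lra|]. lra. } contradiction. }
replace ((-M * px u) * ddpy u - (-M * py u) * ddpx u) with (-M * (px u * ddpy u - py u * ddpx u)) in HX by ring.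
apply Rmult_integral in HX. destruct HX as [HX|HX]; [lra|exact HX].
Qed.

Lemma nrm_sym a b c d : nrm (a - b) (c - d) = nrm (b - a) (d - c).
Proof. unfold nrm; ring. Qed.

Lemma torque_alg m0 m1 m2 x0 y0 x1 y1 x2 y2 F01 F02 F12 ax0 ay0 ax1 ay1 :
 m0*x0 + m1*x1 + m2*x2 = 0 -> m0*y0+m1*y1+m2*y2 = 0 ->
 ax0 = m1*F01*(x1-x0) + m2*F02*(x2-x0) -> ay0 = m1*F01*(y1-y0) + m2*F02*(y2-y0) -> x0*ay0 - y0*ax0 = 0 ->
 ax1 = m0*F01*(x0-x1) + m2*F12*(x2-x1) -> ay1 = m0*F01*(y0-y1) + m2*F12*(y2-y1) -> x1*ay1 - y1*ax1 = 0 ->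
 m1*(x0*y1 - y0*x1)*(F01 - F02) = 0 /\ m0*(x0*y1-y0*x1)*(F12 - F01) = 0.
Proof.
intros Cx Cy A0x A0y T0 A1x A1y T1.
assert (H2: m2*(x0*y2 - y0*x2) = -(m1*(x0*y1-y0*x1))).
{ replace (m2*(x0*y2-y0*x2)) with (x0*(m2*y2) - y0*(m2*x2)) by ring.
  replace (m2*y2) with (-(m0*y0+m1*y1)) by lra. replace (m2*x2) with (-(m0*x0+m1*x1)) by lra. ring. }
assert (H3: m2*(x1*y2 - y1*x2) = m0*(x0*y1-y0*x1)).
{ replace (m2*(x1*y2-y1*x2)) with (x1*(m2*y2) - y1*(m2*x2)) by ring.
  replace (m2*y2) with (-(m0*y0+m1*y1)) by lra. replace (m2*x2) with (-(m0*x0+m1*x1)) by lra. ring. }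
rewrite A0x, A0y in T0. rewrite A1x, A1y in T1.
split.
- replace (m1*(x0*y1 - y0*x1)*(F01 - F02)) with (m1*F01*(x0*y1-y0*x1) + F02*(m2*(x0*y2 - y0*x2))) by (rewrite H2; ring).
  rewrite <- T0. ring.
- replace (m0*(x0*y1 - y0*x1)*(F12 - F01)) with (-(m0*F01*(x0*y1-y0*x1)) + F12*(m2*(x1*y2 - y1*x2))) by (rewrite H3; ring).
  rewrite <- T1. ring.
Qed.

Lemma equi_alg m0 m1 m2 x0 y0 x1 y1 x2 y2 rho :
 m0*x0 + m1*x1 + m2*x2 = 0 -> m0*y0+m1*y1+m2*y2 = 0 ->
 nrm (x1-x0) (y1-y0) = rho -> nrm (x2-x0) (y2-y0) = rho -> nrm (x2-x1) (y2-y1) = rho ->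
 (m0+m1+m2)^2*(x0*x0+y0*y0) = (m1*m1+m2*m2+m1*m2)*rho /\
 (m0+m1+m2)^2*(x1*x1+y1*y1) = (m0*m0+m2*m2+m0*m2)*rho /\
 (m0+m1+m2)^2*(x2*x2+y2*y2) = (m0*m0+m1*m1+m0*m1)*rho.
Proof.
intros Cx Cy H01 H02 H12.
set (M := m0+m1+m2).
assert (X0: M*x0 = m1*(x0-x1) + m2*(x0-x2)) by (unfold M; lra).
assert (Y0: M*y0 = m1*(y0-y1) + m2*(y0-y2)) by (unfold M; lra).
assert (X1: M*x1 = m0*(x1-x0) + m2*(x1-x2)) by (unfold M; lra).
assert (Y1: M*y1 = m0*(y1-y0) + m2*(y1-y2)) by (unfold M; lra).
assert (X2: M*x2 = m0*(x2-x0) + m1*(x2-x1)) by (unfold M; lra).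
assert (Y2: M*y2 = m0*(y2-y0) + m1*(y2-y1)) by (unfold M; lra).
split; [|split].
- replace (M^2*(x0*x0+y0*y0)) with ((M*x0)^2+(M*y0)^2) by ring. rewrite X0, Y0.
  replace ((m1*(x0-x1) + m2*(x0-x2))^2 + (m1*(y0-y1) + m2*(y0-y2))^2) with
   (m1*m1*nrm (x1-x0) (y1-y0) + m2*m2*nrm (x2-x0) (y2-y0) + m1*m2*(nrm (x1-x0) (y1-y0) + nrm (x2-x0) (y2-y0) - nrm (x2-x1) (y2-y1))) by (unfold nrm; ring).
  rewrite H01, H02, H12. ring.
- replace (M^2*(x1*x1+y1*y1)) with ((M*x1)^2+(M*y1)^2) by ring. rewrite X1, Y1.
  replace ((m0*(x1-x0) + m2*(x1-x2))^2 + (m0*(y1-y0) + m2*(y1-y2))^2) with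
   (m0*m0*nrm (x1-x0) (y1-y0) + m2*m2*nrm (x2-x1) (y2-y1) + m0*m2*(nrm (x1-x0) (y1-y0) + nrm (x2-x1) (y2-y1) - nrm (x2-x0) (y2-y0))) by (unfold nrm; ring).
  rewrite H01, H02, H12. ring.
- replace (M^2*(x2*x2+y2*y2)) with ((M*x2)^2+(M*y2)^2) by ring. rewrite X2, Y2.
  replace ((m0*(x2-x0) + m1*(x2-x1))^2 + (m0*(y2-y0) + m1*(y2-y1))^2) with
   (m0*m0*nrm (x2-x0) (y2-y0) + m1*m1*nrm (x2-x1) (y2-y1) + m0*m1*(nrm (x2-x0) (y2-y0) + nrm (x2-x1) (y2-y1) - nrm (x1-x0) (y1-y0))) by (unfold nrm; ring).
  rewrite H01, H02, H12. ring.
Qed.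

Lemma cross_rel m0 m1 m2 x0 y0 x1 y1 x2 y2 :
 m0*x0 + m1*x1 + m2*x2 = 0 -> m0*y0+m1*y1+m2*y2 = 0 ->
 m2*((x1-x0)*(y2-y0) - (y1-y0)*(x2-x0)) = (m0+m1+m2)*(x0*y1-y0*x1) /\
 m2*(x0*y2 - y0*x2) = -(m1*(x0*y1-y0*x1)).
Proof.
intros Cx Cy. split.
- replace (m2*((x1-x0)*(y2-y0) - (y1-y0)*(x2-x0))) with ((x1-x0)*(m2*y2) - (y1-y0)*(m2*x2) - m2*((x1-x0)*y0 - (y1-y0)*x0)) by ring.
  replace (m2*y2) with (-(m0*y0+m1*y1)) by lra. replace (m2*x2) with (-(m0*x0+m1*x1)) by lra. ring.
- replace (m2*(x0*y2-y0*x2)) with (x0*(m2*y2) - y0*(m2*x2)) by ring.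
  replace (m2*y2) with (-(m0*y0+m1*y1)) by lra. replace (m2*x2) with (-(m0*x0+m1*x1)) by lra. ring.
Qed.

Lemma colleq_alg ux uy vx vy rho : ux*vy - uy*vx = 0 -> nrm ux uy = rho -> nrm vx vy = rho ->
  nrm (vx-ux) (vy-uy) = rho -> 0 < rho -> False.
Proof.
unfold nrm. intros Hc H1 H2 H3 Hr.
assert (D: ux*vx+uy*vy = rho/2) by nra.
assert (L: (ux*vx+uy*vy)^2 + (ux*vy-uy*vx)^2 = (ux*ux+uy*uy)*(vx*vx+vy*vy)) by ring.
rewrite D, Hc, H1, H2 in L. nra.
Qed.

Lemma dot_nz ux uy vx vy : ux*vy - uy*vx = 0 -> 0 < nrm ux uy -> 0 < nrm vx vy -> ux*vx+uy*vy <> 0.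
Proof.
unfold nrm. intros Hc H1 H2 D.
assert (L: (ux*vx+uy*vy)^2 + (ux*vy-uy*vx)^2 = (ux*ux+uy*uy)*(vx*vx+vy*vy)) by ring.
rewrite D, Hc in L. nra.
Qed.

Lemma lam_alg ax ay bx by' a'x a'y b'x b'y L :
 0 < ax*ax+ay*ay -> ax*by' - ay*bx = 0 -> (a'x*by' - a'y*bx) + (ax*b'y - ay*b'x) = 0 ->
 ax*a'y - ay*a'x = L -> bx*b'y - by'*b'x = L -> L <> 0 ->
 (bx = ax /\ by' = ay) \/ (bx = -ax /\ by' = -ay).
Proof.
intros HN Hc Hd HLa HLb HL.
set (N := ax*ax+ay*ay).
set (lam := (ax*bx+ay*by')/N).
assert (Bx: bx = lam*ax).
{ unfold lam. apply Rmult_eq_reg_r with N; [|unfold N; lra]. field_simplify; [|unfold N; lra].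
  unfold N. replace (bx * (ax*ax+ay*ay)) with (ax*(ax*bx+ay*by') - ay*(ax*by'-ay*bx)) by ring. rewrite Hc. ring. }
assert (By: by' = lam*ay).
{ unfold lam. apply Rmult_eq_reg_r with N; [|unfold N; lra]. field_simplify; [|unfold N; lra].
  unfold N. replace (by' * (ax*ax+ay*ay)) with (ay*(ax*bx+ay*by') + ax*(ax*by'-ay*bx)) by ring. rewrite Hc. ring. }
assert (E: L = lam*lam*L).
{ rewrite <- HLb at 1. rewrite <- HLa.
  assert (E2: ax*b'y - ay*b'x = -(a'x*by' - a'y*bx)) by lra.
  replace (bx*b'y - by'*b'x) with (lam*(ax*b'y - ay*b'x)) by (rewrite Bx, By; ring).
  rewrite E2, Bx, By. ring. }
assert (E3: (lam - 1)*(lam+1) = 0).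
{ apply Rmult_eq_reg_r with L; auto. replace ((lam-1)*(lam+1)*L) with (lam*lam*L - L) by ring. lra. }
apply Rmult_integral in E3. destruct E3 as [E3|E3].
- left. rewrite Bx, By. replace lam with 1 by lra. split; ring.
- right. rewrite Bx, By. replace lam with (-1) by lra. split; ring.
Qed.

Lemma sq0 x y : x^2 + y^2 = 0 -> x = 0 /\ y = 0.
Proof. intro H. split; nra. Qed.

Ltac solve_exd := repeat match goal with
 | |- _ /\ _ => split
 | |- True => exact I
 | H : ?a <> 0 |- ?a <> 0 => exact H
 | H : forall t, is_derive ?g t _ |- ex_derive ?g _ => eexists; apply H
 end.

Ltac rw_der := repeat match goal with
 | H : forall t, is_derive ?g t _ |- _ => rewrite (is_derive_unique _ _ _ (H _))
 end.

Lemma core (f : R -> R) (m0 m1 m2 : R) (px py dpx dpy ddpx ddpy : R -> R) (h0 h1 h2 T s cx cy C S : R)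
 (Hfi : forall x y, 0 < x -> 0 < y -> f x = f y -> x = y)
 (Hm0 : 0 < m0) (Hm1 : 0 < m1) (Hm2 : 0 < m2)
 (Dx : forall t, is_derive px t (dpx t)) (DDx : forall t, is_derive dpx t (ddpx t))
 (Dy : forall t, is_derive py t (dpy t)) (DDy : forall t, is_derive dpy t (ddpy t))
 (HT : 0 < T) (Px : forall t, px (t + T) = px t) (Py : forall t, py (t + T) = py t)
 (N01 : forall t, 0 < nrm (px (t+h1) - px (t+h0)) (py (t+h1) - py (t+h0)))
 (N02 : forall t, 0 < nrm (px (t+h2) - px (t+h0)) (py (t+h2) - py (t+h0)))
 (N12 : forall t, 0 < nrm (px (t+h2) - px (t+h1)) (py (t+h2) - py (t+h1)))
 (E0x : forall t, ddpx (t+h0) = m1 * f (nrm (px (t+h1) - px (t+h0)) (py (t+h1) - py (t+h0))) * (px (t+h1) - px (t+h0)) + m2 * f (nrm (px (t+h2) - px (t+h0)) (py (t+h2) - py (t+h0))) * (px (t+h2) - px (t+h0)))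
 (E0y : forall t, ddpy (t+h0) = m1 * f (nrm (px (t+h1) - px (t+h0)) (py (t+h1) - py (t+h0))) * (py (t+h1) - py (t+h0)) + m2 * f (nrm (px (t+h2) - px (t+h0)) (py (t+h2) - py (t+h0))) * (py (t+h2) - py (t+h0)))
 (E1x : forall t, ddpx (t+h1) = m0 * f (nrm (px (t+h0) - px (t+h1)) (py (t+h0) - py (t+h1))) * (px (t+h0) - px (t+h1)) + m2 * f (nrm (px (t+h2) - px (t+h1)) (py (t+h2) - py (t+h1))) * (px (t+h2) - px (t+h1)))
 (E1y : forall t, ddpy (t+h1) = m0 * f (nrm (px (t+h0) - px (t+h1)) (py (t+h0) - py (t+h1))) * (py (t+h0) - py (t+h1)) + m2 * f (nrm (px (t+h2) - px (t+h1)) (py (t+h2) - py (t+h1))) * (py (t+h2) - py (t+h1)))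
 (E2x : forall t, ddpx (t+h2) = m0 * f (nrm (px (t+h0) - px (t+h2)) (py (t+h0) - py (t+h2))) * (px (t+h0) - px (t+h2)) + m1 * f (nrm (px (t+h1) - px (t+h2)) (py (t+h1) - py (t+h2))) * (px (t+h1) - px (t+h2)))
 (E2y : forall t, ddpy (t+h2) = m0 * f (nrm (px (t+h0) - px (t+h2)) (py (t+h0) - py (t+h2))) * (py (t+h0) - py (t+h2)) + m1 * f (nrm (px (t+h1) - px (t+h2)) (py (t+h1) - py (t+h2))) * (py (t+h1) - py (t+h2)))
 (Cx : forall t, m0 * px (t+h0) + m1 * px (t+h1) + m2 * px (t+h2) = 0)
 (Cy : forall t, m0 * py (t+h0) + m1 * py (t+h1) + m2 * py (t+h2) = 0)
 (HCS : C*C + S*S = 1)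
 (Sx : forall v, px (2*s - v) = cx + C * (px v - cx) + S * (py v - cy))
 (Sy : forall v, py (2*s - v) = cy + S * (px v - cx) - C * (py v - cy)) :
 m0 = m1 /\ m1 = m2.
Proof.
destruct (classic (m0 = m1 /\ m1 = m2)) as [H|Hne]; [exact H|exfalso].
destruct (mirror_deriv px py dpx dpy ddpx ddpy s cx cy C S Dx DDx Dy DDy Sx Sy) as [HAx HAy].
assert (Hcr: forall u, px u * ddpy u - py u * ddpx u = 0).
{ apply (cross_zero f m0 m1 m2 px py ddpx ddpy h0 h1 h2 s cx cy C S Hm0 Hm1 Hm2 HCS Sx Sy HAx HAy Cx Cy); [..|exact Hne].
  - intro u. specialize (E0x (u - h0)). unfold dd.
    replace (u - h0 + h0) with u in E0x by ring. replace (u - h0 + h1) with (u + (h1-h0)) in E0x by ring.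
    replace (u - h0 + h2) with (u + (h2-h0)) in E0x by ring. exact E0x.
  - intro u. specialize (E0y (u - h0)). unfold dd.
    replace (u - h0 + h0) with u in E0y by ring. replace (u - h0 + h1) with (u + (h1-h0)) in E0y by ring.
    replace (u - h0 + h2) with (u + (h2-h0)) in E0y by ring. exact E0y.
  - intro u. specialize (E1x (u - h1)). unfold dd.
    replace (u - h1 + h1) with u in E1x by ring. replace (u - h1 + h0) with (u + (h0-h1)) in E1x by ring.
    replace (u - h1 + h2) with (u + (h2-h1)) in E1x by ring. exact E1x.
  - intro u. specialize (E1y (u - h1)). unfold dd.
    replace (u - h1 + h1) with u in E1y by ring. replace (u - h1 + h0) with (u + (h0-h1)) in E1y by ring.
    replace (u - h1 + h2) with (u + (h2-h1)) in E1y by ring. exact E1y.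
  - intro u. specialize (E2x (u - h2)). unfold dd.
    replace (u - h2 + h2) with u in E2x by ring. replace (u - h2 + h0) with (u + (h0-h2)) in E2x by ring.
    replace (u - h2 + h1) with (u + (h1-h2)) in E2x by ring. exact E2x.
  - intro u. specialize (E2y (u - h2)). unfold dd.
    replace (u - h2 + h2) with u in E2y by ring. replace (u - h2 + h0) with (u + (h0-h2)) in E2y by ring.
    replace (u - h2 + h1) with (u + (h1-h2)) in E2y by ring. exact E2y. }

assert (TQ: forall t,
  m1*(px (t+h0)*py (t+h1) - py (t+h0)*px (t+h1))*(f (nrm (px (t+h1) - px (t+h0)) (py (t+h1) - py (t+h0))) - f (nrm (px (t+h2) - px (t+h0)) (py (t+h2) - py (t+h0)))) = 0 /\
  m0*(px (t+h0)*py (t+h1) - py (t+h0)*px (t+h1))*(f (nrm (px (t+h2) - px (t+h1)) (py (t+h2) - py (t+h1))) - f (nrm (px (t+h1) - px (t+h0)) (py (t+h1) - py (t+h0)))) = 0).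
{ intro t.
  pose proof (E1x t) as A1x. pose proof (E1y t) as A1y.
  rewrite (nrm_sym (px (t+h0))) in A1x, A1y.
  apply (torque_alg m0 m1 m2 _ _ _ _ (px (t+h2)) (py (t+h2)) _ _ _ (ddpx (t+h0)) (ddpy (t+h0)) (ddpx (t+h1)) (ddpy (t+h1)) (Cx t) (Cy t) (E0x t) (E0y t) (Hcr (t+h0)) A1x A1y (Hcr (t+h1))). }
assert (EqD: forall t, px (t+h0)*py (t+h1) - py (t+h0)*px (t+h1) <> 0 ->
   nrm (px (t+h1) - px (t+h0)) (py (t+h1) - py (t+h0)) = nrm (px (t+h2) - px (t+h0)) (py (t+h2) - py (t+h0)) /\
   nrm (px (t+h2) - px (t+h1)) (py (t+h2) - py (t+h1)) = nrm (px (t+h1) - px (t+h0)) (py (t+h1) - py (t+h0))).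
{ intros t Hk. destruct (TQ t) as [T1 T2]. split; apply Hfi; try apply N01; try apply N02; try apply N12.
  - apply Rmult_integral in T1. destruct T1 as [T1|T1]; [|lra].
    apply Rmult_integral in T1. destruct T1 as [T1|T1]; lra.
  - apply Rmult_integral in T2. destruct T2 as [T2|T2]; [|lra].
    apply Rmult_integral in T2. destruct T2 as [T2|T2]; lra. }
pose (kap := fun t => px (t+h0)*py (t+h1) - py (t+h0)*px (t+h1)).
destruct (classic (exists t0, kap t0 = 0)) as [[t0 Ht0]|Hnk].
2:{ (* equilateral case *)
  assert (Hk: forall t, kap t <> 0) by (intros t Ht; apply Hnk; exists t; exact Ht).
  set (M := m0+m1+m2).
  assert (EQ: forall t,
    M^2*(px (t+h0)*px (t+h0)+py (t+h0)*py (t+h0)) = (m1*m1+m2*m2+m1*m2)*nrm (px (t+h1) - px (t+h0)) (py (t+h1) - py (t+h0)) /\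
    M^2*(px (t+h1)*px (t+h1)+py (t+h1)*py (t+h1)) = (m0*m0+m2*m2+m0*m2)*nrm (px (t+h1) - px (t+h0)) (py (t+h1) - py (t+h0)) /\
    M^2*(px (t+h2)*px (t+h2)+py (t+h2)*py (t+h2)) = (m0*m0+m1*m1+m0*m1)*nrm (px (t+h1) - px (t+h0)) (py (t+h1) - py (t+h0))).
  { intro t. destruct (EqD t (Hk t)) as [D1 D2]. unfold M.
    apply equi_alg; [apply Cx|apply Cy|reflexivity|symmetry; exact D1|exact D2]. }
  pose (g := fun t => nrm (px (t+h1) - px (t+h0)) (py (t+h1) - py (t+h0))).
  assert (gc: continuity g) by (apply cont_of_der; intro t; unfold g, nrm; auto_derive; solve_exd).
  assert (gp: forall t, g (t + T) = g t).
  { intro t. unfold g. replace (t+T+h1) with ((t+h1)+T) by ring. replace (t+T+h0) with ((t+h0)+T) by ring.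
    rewrite !Px, !Py. reflexivity. }
  assert (gpos: forall t, 0 < g t) by (intro t; apply N01).
  assert (B1: m1*m1+m2*m2+m1*m2 = m0*m0+m2*m2+m0*m2).
  { apply (ratio_one g T (h0-h1)); auto; try nra.
    intro t. unfold g. destruct (EQ t) as [Q0 _]. destruct (EQ (t + (h0-h1))) as [_ [Q1 _]].
    replace (t + (h0 - h1) + h1) with (t+h0) in Q1 |- * by ring. rewrite <- Q0, <- Q1. reflexivity. }
  assert (B2: m1*m1+m2*m2+m1*m2 = m0*m0+m1*m1+m0*m1).
  { apply (ratio_one g T (h0-h2)); auto; try nra.
    intro t. unfold g. destruct (EQ t) as [Q0 _]. destruct (EQ (t + (h0-h2))) as [_ [_ Q2]].
    replace (t + (h0 - h2) + h2) with (t+h0) in Q2 by ring. rewrite <- Q0, <- Q2. reflexivity. }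
  apply Hne.
  assert (F1: (m1 - m0)*(m0+m1+m2) = 0) by nra.
  assert (F2: (m2 - m0)*(m0+m1+m2) = 0) by nra.
  apply Rmult_integral in F1. apply Rmult_integral in F2.
  destruct F1; destruct F2; split; lra. }

(* collinear case *)
pose (n01 := fun t => nrm (px (t+h1) - px (t+h0)) (py (t+h1) - py (t+h0))).
pose (n02 := fun t => nrm (px (t+h2) - px (t+h0)) (py (t+h2) - py (t+h0))).
pose (n12 := fun t => nrm (px (t+h2) - px (t+h1)) (py (t+h2) - py (t+h1))).
pose (psi := fun t => (n01 t - n02 t)^2 + (n01 t - n12 t)^2).
assert (Or: forall t, kap t = 0 \/ psi t = 0).
{ intro t. destruct (Req_dec (kap t) 0) as [E|E]; [left; exact E|right].
  destruct (EqD t E) as [D1 D2]. unfold psi, n01, n02, n12. rewrite <- D1, D2. ring. }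
assert (Nboth: forall t, kap t = 0 -> psi t = 0 -> False).
{ intros t Hk Hp. unfold psi in Hp.
  destruct (sq0 _ _ Hp) as [D1 D2]. apply Rminus_diag_uniq in D1. apply Rminus_diag_uniq in D2.
  destruct (cross_rel m0 m1 m2 _ _ _ _ (px (t+h2)) (py (t+h2)) (Cx t) (Cy t)) as [CR _].
  fold (kap t) in CR. rewrite Hk in CR.
  apply (colleq_alg (px (t+h1) - px (t+h0)) (py (t+h1) - py (t+h0)) (px (t+h2) - px (t+h0)) (py (t+h2) - py (t+h0)) (n01 t)).
  - assert (m2 * ((px (t + h1) - px (t + h0)) * (py (t + h2) - py (t + h0)) - (py (t + h1) - py (t + h0)) * (px (t + h2) - px (t + h0))) = 0) by lra.
    apply Rmult_integral in H. destruct H; lra.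
  - reflexivity.
  - rewrite D1. reflexivity.
  - rewrite D2. unfold n12. f_equal; ring.
  - apply N01. }
assert (AllK: forall t, kap t = 0).
{ intro t1. destruct (Req_dec (kap t1) 0) as [E|E]; [exact E|exfalso].
  pose (H := fun t => kap t ^ 2 - psi t).
  assert (Hc: continuity H).
  { apply cont_of_der. intro t. unfold H, kap, psi, n01, n02, n12, nrm. auto_derive. solve_exd. }
  assert (Hpsi: forall t, 0 <= psi t) by (intro t; unfold psi; apply Rplus_le_le_0_compat; apply pow2_ge_0).
  assert (Ha: H t0 < 0).
  { unfold H. rewrite Ht0. assert (psi t0 <> 0) by (intro; apply (Nboth t0); auto). specialize (Hpsi t0). lra. }
  assert (Hb: 0 < H t1).
  { unfold H. destruct (Or t1) as [E1|E1]; [contradiction|]. rewrite E1.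
    assert (0 < kap t1 ^ 2) by (apply pow2_gt_0; exact E). lra. }
  destruct (ivt_any H t0 t1 Hc Ha Hb) as [z Hz]. unfold H in Hz.
  destruct (Or z) as [E1|E1].
  - apply (Nboth z E1). rewrite E1 in Hz. lra.
  - rewrite E1 in Hz. apply (Nboth z); auto. apply Rsqr_0_uniq; unfold Rsqr; lra. }

assert (CR0: forall t, (px (t+h1) - px (t+h0)) * (py (t+h2) - py (t+h0)) - (py (t+h1) - py (t+h0)) * (px (t+h2) - px (t+h0)) = 0).
{ intro t. destruct (cross_rel m0 m1 m2 _ _ _ _ (px (t+h2)) (py (t+h2)) (Cx t) (Cy t)) as [CR _].
  fold (kap t) in CR. rewrite (AllK t) in CR.
  assert (HH: m2 * ((px (t + h1) - px (t + h0)) * (py (t + h2) - py (t + h0)) - (py (t + h1) - py (t + h0)) * (px (t + h2) - px (t + h0))) = 0) by lra.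
  apply Rmult_integral in HH. destruct HH; lra. }
assert (NZ: forall s0, ~ (px s0 = 0 /\ py s0 = 0)).
{ intros s0 [Z1 Z2].
  pose (g0 := fun t => (px (t+h1) - px (t+h0)) * (px (t+h2) - px (t+h0)) + (py (t+h1) - py (t+h0)) * (py (t+h2) - py (t+h0))).
  assert (gc: continuity g0) by (apply cont_of_der; intro t; unfold g0; auto_derive; solve_exd).
  assert (Ga: g0 (s0 - h0) < 0).
  { unfold g0. pose proof (Cx (s0 - h0)) as C1. pose proof (Cy (s0 - h0)) as C2. pose proof (N02 (s0 - h0)) as N.
    replace (s0 - h0 + h0) with s0 in C1, C2, N |- * by ring. rewrite Z1 in C1. rewrite Z2 in C2. rewrite Z1, Z2 in N |- *.
    unfold nrm in N.
    set (x1 := px (s0 - h0 + h1)) in *. set (y1 := py (s0 - h0 + h1)) in *.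
    set (x2 := px (s0 - h0 + h2)) in *. set (y2 := py (s0 - h0 + h2)) in *.
    assert (E: m1 * ((x1 - 0) * (x2 - 0) + (y1 - 0) * (y2 - 0)) = (m1*x1)*x2 + (m1*y1)*y2) by ring.
    replace (m1*x1) with (-(m2*x2)) in E by lra. replace (m1*y1) with (-(m2*y2)) in E by lra.
    assert (0 < m2 * ((x2 - 0) * (x2 - 0) + (y2 - 0) * (y2 - 0))) by (apply Rmult_lt_0_compat; lra).
    assert (m1 * ((x1 - 0) * (x2 - 0) + (y1 - 0) * (y2 - 0)) < 0) by (rewrite E; nra).
    nra. }
  assert (Gb: 0 < g0 (s0 - h1)).
  { unfold g0. pose proof (Cx (s0 - h1)) as C1. pose proof (Cy (s0 - h1)) as C2. pose proof (N01 (s0 - h1)) as N.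
    replace (s0 - h1 + h1) with s0 in C1, C2, N |- * by ring. rewrite Z1 in C1. rewrite Z2 in C2. rewrite Z1, Z2 in N |- *.
    unfold nrm in N.
    set (x0 := px (s0 - h1 + h0)) in *. set (y0 := py (s0 - h1 + h0)) in *.
    set (x2 := px (s0 - h1 + h2)) in *. set (y2 := py (s0 - h1 + h2)) in *.
    assert (E: m2 * ((0 - x0) * (x2 - x0) + (0 - y0) * (y2 - y0)) = m2*(x0*x0+y0*y0) - x0*(m2*x2) - y0*(m2*y2)) by ring.
    replace (m2*x2) with (-(m0*x0)) in E by lra. replace (m2*y2) with (-(m0*y0)) in E by lra.
    assert (P: 0 < x0*x0+y0*y0) by nra.
    assert (0 < m2 * ((0 - x0) * (x2 - x0) + (0 - y0) * (y2 - y0))) by (rewrite E; nra).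
    nra. }
  destruct (ivt_any g0 _ _ gc Ga Gb) as [z Hz].
  apply (dot_nz (px (z+h1) - px (z+h0)) (py (z+h1) - py (z+h0)) (px (z+h2) - px (z+h0)) (py (z+h2) - py (z+h0))).
  - apply CR0.
  - apply N01.
  - apply N02.
  - exact Hz. }
pose (L := fun s => px s * dpy s - py s * dpx s).
assert (Lc: forall a, L a = L 0).
{ intro a. apply der_const. intro t. unfold L. auto_derive; [solve_exd|]. rw_der.
  pose proof (Hcr t). lra. }

pose (kap2 := fun t => px (t+h0)*py (t+h2) - py (t+h0)*px (t+h2)).
assert (AllK2: forall t, kap2 t = 0).
{ intro t. destruct (cross_rel m0 m1 m2 _ _ _ _ (px (t+h2)) (py (t+h2)) (Cx t) (Cy t)) as [_ CR].
  fold (kap t) in CR. rewrite (AllK t) in CR. unfold kap2.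
  assert (HH: m2 * (px (t + h0) * py (t + h2) - py (t + h0) * px (t + h2)) = 0) by lra.
  apply Rmult_integral in HH. destruct HH; lra. }
assert (Npos: forall u, 0 < px u * px u + py u * py u).
{ intro u. destruct (Req_dec (px u) 0) as [E1|E1].
  - destruct (Req_dec (py u) 0) as [E2|E2]. { exfalso. apply (NZ u). auto. }
    rewrite E1. nra.
  - nra. }
destruct (Req_dec (L 0) 0) as [L0|L0].
2:{
  assert (DK: dpx (0+h0)*py (0+h1) - dpy (0+h0)*px (0+h1) + (px (0+h0)*dpy (0+h1) - py (0+h0)*dpx (0+h1)) = 0).
  { apply (der_uniq kap (fun _ => 0) 0).
    - exact AllK.
    - unfold kap. auto_derive; [solve_exd|]. rw_der. ring.
    - auto_derive; reflexivity. }
  assert (DK2: dpx (0+h0)*py (0+h2) - dpy (0+h0)*px (0+h2) + (px (0+h0)*dpy (0+h2) - py (0+h0)*dpx (0+h2)) = 0).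
  { apply (der_uniq kap2 (fun _ => 0) 0).
    - exact AllK2.
    - unfold kap2. auto_derive; [solve_exd|]. rw_der. ring.
    - auto_derive; reflexivity. }
  assert (La: px (0+h0) * dpy (0+h0) - py (0+h0) * dpx (0+h0) = L 0) by (rewrite <- (Lc (0+h0)); reflexivity).
  assert (Lb: px (0+h1) * dpy (0+h1) - py (0+h1) * dpx (0+h1) = L 0) by (rewrite <- (Lc (0+h1)); reflexivity).
  assert (Lc2: px (0+h2) * dpy (0+h2) - py (0+h2) * dpx (0+h2) = L 0) by (rewrite <- (Lc (0+h2)); reflexivity).
  pose proof (N01 0) as n1. pose proof (N02 0) as n2. pose proof (N12 0) as n3. unfold nrm in n1, n2, n3.
  destruct (lam_alg _ _ _ _ _ _ _ _ (L 0) (Npos (0+h0)) (AllK 0) DK La Lb L0) as [[B1 B2]|[B1 B2]].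
  - rewrite B1, B2 in n1. lra.
  - destruct (lam_alg _ _ _ _ _ _ _ _ (L 0) (Npos (0+h0)) (AllK2 0) DK2 La Lc2 L0) as [[D1 D2]|[D1 D2]].
    + rewrite D1, D2 in n2. lra.
    + rewrite B1, B2, D1, D2 in n3. lra. }
set (ex := px 0) in *. set (ey := py 0) in *.
assert (Le: 0 < ex*ex + ey*ey) by apply Npos.
pose (z := fun u => (ex * py u - ey * px u)^2 / (px u * px u + py u * py u)).
assert (Zc: forall u, z u = z 0).
{ intro u. apply der_const. intro t.
  assert (Nt: px t * px t + py t * py t <> 0) by (apply Rgt_not_eq; apply Npos).
  assert (Lt: px t * dpy t - py t * dpx t = 0) by (rewrite <- L0; apply (Lc t)).
  unfold z. auto_derive.
  - solve_exd.
  - rw_der.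
    transitivity (2*(ex * py t - ey * px t)*(ex * px t + ey * py t)*(px t * dpy t - py t * dpx t) / (px t * px t + py t * py t)^2).
    + field. exact Nt.
    + rewrite Lt. field. exact Nt. }
assert (Y0: forall u, ex * py u - ey * px u = 0).
{ intro u. pose proof (Zc u) as H. unfold z in H. cbv beta in H. change (px 0) with ex in H. change (py 0) with ey in H.
  replace ((ex * ey - ey * ex) ^ 2 / (ex * ex + ey * ey)) with 0 in H by (field; lra).
  pose proof (Npos u) as Pu.
  assert (HH: (ex * py u - ey * px u)^2 = 0).
  { apply Rmult_eq_reg_r with (/ (px u * px u + py u * py u)).
    - rewrite Rmult_0_l. exact H.
    - apply Rinv_neq_0_compat. lra. }
  apply Rsqr_0_uniq. unfold Rsqr. lra. }
pose (w := fun u => ex * px u + ey * py u).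
assert (Wc: continuity w) by (apply cont_of_der; intro t; unfold w; auto_derive; solve_exd).
assert (Wpos: forall u, 0 < w u).
{ apply (pos_preserved w 0 Wc).
  - intros t Ht. unfold w in Ht.
    assert (Lg: (ex * px t + ey * py t)^2 + (ex * py t - ey * px t)^2 = (ex*ex+ey*ey)*(px t * px t + py t * py t)) by ring.
    rewrite Ht, Y0 in Lg. pose proof (Npos t). nra.
  - unfold w. unfold ex, ey. apply Npos. }
pose proof (Wpos (0+h0)) as W0. pose proof (Wpos (0+h1)) as W1. pose proof (Wpos (0+h2)) as W2.
unfold w in W0, W1, W2.
pose proof (Cx 0) as C1. pose proof (Cy 0) as C2.
assert (E: m0 * (ex * px (0+h0) + ey * py (0+h0)) + m1 * (ex * px (0+h1) + ey * py (0+h1)) + m2 * (ex * px (0+h2) + ey * py (0+h2))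
   = ex * (m0 * px (0+h0) + m1 * px (0+h1) + m2 * px (0+h2)) + ey * (m0 * py (0+h0) + m1 * py (0+h1) + m2 * py (0+h2))) by ring.
rewrite C1, C2 in E.
assert (0 < m0 * (ex * px (0+h0) + ey * py (0+h0))) by (apply Rmult_lt_0_compat; lra).
assert (0 < m1 * (ex * px (0+h1) + ey * py (0+h1))) by (apply Rmult_lt_0_compat; lra).
assert (0 < m2 * (ex * px (0+h2) + ey * py (0+h2))) by (apply Rmult_lt_0_compat; lra).
lra.
Qed.


Lemma deriv2 (g dg ddg : R -> R) : (forall t, is_derive g t (dg t)) -> (forall t, is_derive dg t (ddg t)) ->
  forall t, Derive_n g 2 t = ddg t.
Proof.
intros D DD t. apply is_derive_n_unique. simpl.
apply (is_derive_ext dg). intro x. symmetry. apply is_derive_unique. apply D. apply DD.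
Qed.

Lemma f_inj (f : R -> R) : (forall x, 0 < x -> 0 < f x) ->
  (forall x y, 0 < x -> x < y -> sqrt y * f y < sqrt x * f x) ->
  forall x y, 0 < x -> 0 < y -> f x = f y -> x = y.
Proof.
intros Hp Hd x y Hx Hy E.
destruct (Rtotal_order x y) as [L|[L|L]]; auto; exfalso.
- pose proof (Hd x y Hx L) as H. rewrite E in H. pose proof (sqrt_lt_1_alt x y (conj (Rlt_le _ _ Hx) L)).
  pose proof (Hp y Hy). nra.
- pose proof (Hd y x Hy L) as H. rewrite E in H. pose proof (sqrt_lt_1_alt y x (conj (Rlt_le _ _ Hy) L)).
  pose proof (Hp y Hy). nra.
Qed.

Theorem theorem2 (f : R -> R) (m : nat -> R) (q : nat -> R -> R * R) :
  (forall x, 0 < x -> 0 < f x) ->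
  (forall x y, 0 < x -> x < y -> sqrt y * f y < sqrt x * f x) ->
  (forall k, (k < 3)%nat -> 0 < m k) ->
  is_solution f m q ->
  center_of_mass_zero m q ->
  (exists p, choreography_curve q p /\ has_symmetry_axis p) ->
  m 0%nat = m 1%nat /\ m 1%nat = m 2%nat.
Proof.
intros Hfpos Hdec Hm Hsol Hcom [p [[HC2p [[T [HT Hper]] [h Hh]]] [c [th [s Hsym]]]]].
destruct Hsol as [Hcol [_ Hacc]].
destruct HC2p as [[dpx [ddpx [Dx [DDx _]]]] [dpy [ddpy [Dy [DDy _]]]]].
assert (A: forall k t, (k < 3)%nat -> ddpx (t + h k) = fst (rhs f m q k t) /\ ddpy (t + h k) = snd (rhs f m q k t)).
{ intros k t Hk. rewrite <- (Hacc k t Hk). unfold acc. cbn [fst snd]. split.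
  - rewrite <- (deriv2 _ _ _ Dx DDx). rewrite <- (Derive_n_comp_trans (fun x => fst (p x))).
    apply Derive_n_ext. intro x. rewrite (Hh k x Hk). reflexivity.
  - rewrite <- (deriv2 _ _ _ Dy DDy). rewrite <- (Derive_n_comp_trans (fun x => snd (p x))).
    apply Derive_n_ext. intro x. rewrite (Hh k x Hk). reflexivity. }
assert (Nz: forall j k t, (j < 3)%nat -> (k < 3)%nat -> j <> k ->
   0 < nrm (fst (p (t + h j)) - fst (p (t + h k))) (snd (p (t + h j)) - snd (p (t + h k)))).
{ intros j k t Hj Hk Hjk. pose proof (Hcol j k t Hj Hk Hjk) as H. rewrite (Hh j t Hj), (Hh k t Hk) in H.
  unfold nrm. destruct (p (t + h j)) as [a b]. destruct (p (t + h k)) as [a' b']. simpl.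
  destruct (Req_dec a a') as [E1|E1].
  - destruct (Req_dec b b') as [E2|E2]. { subst. contradiction. }
    assert (0 < Rsqr (b - b')) by (apply Rsqr_pos_lt; lra). pose proof (Rle_0_sqr (a - a')). unfold Rsqr in *. lra.
  - assert (0 < Rsqr (a - a')) by (apply Rsqr_pos_lt; lra). pose proof (Rle_0_sqr (b - b')). unfold Rsqr in *. lra. }
set (C := 2 * cos th * cos th - 1). set (S := 2 * sin th * cos th).
assert (Hsc: sin th * sin th + cos th * cos th = 1) by (pose proof (sin2_cos2 th) as H; unfold Rsqr in H; lra).
apply (core f (m 0%nat) (m 1%nat) (m 2%nat) (fun t => fst (p t)) (fun t => snd (p t)) dpx dpy ddpx ddpy
  (h 0%nat) (h 1%nat) (h 2%nat) T s (fst c) (snd c) C S).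
- apply f_inj; auto.
- apply Hm; lia.
- apply Hm; lia.
- apply Hm; lia.
- exact Dx.
- exact DDx.
- exact Dy.
- exact DDy.
- exact HT.
- intro t. simpl. rewrite Hper. reflexivity.
- intro t. simpl. rewrite Hper. reflexivity.
- intro t. apply Nz; lia.
- intro t. apply Nz; lia.
- intro t. apply Nz; lia.
- intro t. rewrite (proj1 (A 0%nat t ltac:(lia))). unfold rhs, force_term, vadd, vscale, vsub, vnorm2, vdot. simpl.
  rewrite !Hh by lia. unfold nrm. ring.
- intro t. rewrite (proj2 (A 0%nat t ltac:(lia))). unfold rhs, force_term, vadd, vscale, vsub, vnorm2, vdot. simpl.
  rewrite !Hh by lia. unfold nrm. ring.
- intro t. rewrite (proj1 (A 1%nat t ltac:(lia))). unfold rhs, force_term, vadd, vscale, vsub, vnorm2, vdot. simpl.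
  rewrite !Hh by lia. unfold nrm. ring.
- intro t. rewrite (proj2 (A 1%nat t ltac:(lia))). unfold rhs, force_term, vadd, vscale, vsub, vnorm2, vdot. simpl.
  rewrite !Hh by lia. unfold nrm. ring.
- intro t. rewrite (proj1 (A 2%nat t ltac:(lia))). unfold rhs, force_term, vadd, vscale, vsub, vnorm2, vdot. simpl.
  rewrite !Hh by lia. unfold nrm. ring.
- intro t. rewrite (proj2 (A 2%nat t ltac:(lia))). unfold rhs, force_term, vadd, vscale, vsub, vnorm2, vdot. simpl.
  rewrite !Hh by lia. unfold nrm. ring.
- intro t. pose proof (f_equal fst (Hcom t)) as H. unfold vadd, vscale in H. simpl in H.
  rewrite !Hh in H by lia. lra.
- intro t. pose proof (f_equal snd (Hcom t)) as H. unfold vadd, vscale in H. simpl in H.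
  rewrite !Hh in H by lia. lra.
- unfold C, S. transitivity (4*cos th*cos th*(sin th*sin th + cos th*cos th) - 4*cos th*cos th + 1); [ring|].
  rewrite Hsc. ring.
- intro v. pose proof (Hsym (v - s)) as H. replace (s - (v - s)) with (2*s - v) in H by ring.
  replace (s + (v - s)) with v in H by ring. rewrite H. unfold reflect_line, vadd, vsub, vscale, vdot, C, S. simpl. ring.
- intro v. pose proof (Hsym (v - s)) as H. replace (s - (v - s)) with (2*s - v) in H by ring.
  replace (s + (v - s)) with v in H by ring. rewrite H. unfold reflect_line, vadd, vsub, vscale, vdot, C, S. simpl.
  transitivity (snd c + 2 * sin th * cos th * (fst (p v) - fst c) - (2 * cos th * cos th - 1) * (snd (p v) - snd c)
     + 2*(snd (p v) - snd c)*(sin th * sin th + cos th * cos th - 1)); [ring|].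
  rewrite Hsc. ring.
Qed.
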